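(* Proper interval graphs $\subsetneq$ exactly hittable interval graphs $\subsetneq$ interval graphs (both containments are strict).
   Context: An interval graph is the intersection graph of a finite family of intervals on a line. A proper interval graph is an interval graph having an interval representation in which no interval properly contains another. An interval hypergraph has vertex set $[n]$ and hyperedges that are nonempty sets of consecutive integers; it is exactly hittable if there is a set $T$ of points with $|T\cap I|=1$ for every hyperedge $I$. An exactly hittable interval graph is an interval graph that is the intersection graph of an exactly hittable interval hypergraph. *)

(* Defs.v *)
From mathcomp Require Import all_boot all_order all_algebra.
Set Implicit Arguments. Unset Strict Implicit. Unset Printing Implicit Defensive.
Import Order.TTheory GRing.Theory Num.Theory.
Local Open Scope ring_scope.

Definition simple_graph (V : finType) (e : rel V) : Prop :=
  symmetric e /\ irreflexive e.

Definition in_interval (l r : rat) (p : rat) : bool := (l <= p) && (p <= r).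

Definition interval_model (V : finType) (e : rel V) (l r : V -> rat) : Prop :=
  (forall v, l v <= r v) /\
  (forall x y, x != y ->
     (e x y <-> exists p, in_interval (l x) (r x) p && in_interval (l y) (r y) p)).

Definition interval_graph (V : finType) (e : rel V) : Prop :=
  exists l r : V -> rat, interval_model e l r.

Definition proper_family (V : finType) (l r : V -> rat) : Prop :=
  forall x y : V,
    ~ ((forall p, in_interval (l y) (r y) p -> in_interval (l x) (r x) p) /\
       (exists p, in_interval (l x) (r x) p && ~~ in_interval (l y) (r y) p)).

Definition proper_interval_graph (V : finType) (e : rel V) : Prop :=
  exists l r : V -> rat, interval_model e l r /\ proper_family l r.

(* Exactly hittable interval graph: (V, e) is the intersection graph of an
   interval hypergraph on [n] = {1..n} (hyperedges v |-> {l v, ..., r v},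
   nonempty sets of consecutive integers, indexed by the vertices of the graph)
   admitting a set T of points hitting every hyperedge exactly once. *)
Definition exactly_hittable_interval_graph (V : finType) (e : rel V) : Prop :=
  exists (n : nat) (l r : V -> nat) (T : pred nat),
    (forall v, (1 <= l v)%N && (l v <= r v)%N && (r v <= n)%N) /\
    (forall v, count (fun p => T p && (l v <= p <= r v)%N) (iota 1 n) = 1%N) /\
    (forall x y, x != y ->
       (e x y <-> exists p : nat, [&& (l x <= p <= r x)%N & (l y <= p <= r y)%N])).

(* Main.v *)
Require Import Defs.
From mathcomp Require Import all_boot all_order all_algebra.
From mathcomp Require Import zify.
From mathcomp.algebra_tactics Require Import ring lra.
Import Order.TTheory GRing.Theory Num.Theory.
Set Implicit Arguments. Unset Strict Implicit. Unset Printing Implicit Defensive.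
Local Open Scope ring_scope.
Lemma meet_rat (a b c d : rat) : a <= b -> c <= d ->
  (exists p, in_interval a b p && in_interval c d p) <-> (a <= d) && (c <= b).
Proof.
move=> hab hcd; rewrite /in_interval; split.
  case=> p /andP [/andP[h1 h2] /andP[h3 h4]]; apply/andP; split; lra.
case/andP=> h1 h2; case: (lerP a c) => h.
  by exists c; rewrite h h2 hcd lexx.
by exists a; rewrite (ltW h) h1 hab lexx.
Qed.

Lemma meet_nat (a b c d : nat) : (a <= b)%N -> (c <= d)%N ->
  (exists p : nat, (a <= p <= b)%N && (c <= p <= d)%N) <-> (a <= d)%N && (c <= b)%N.
Proof.
move=> hab hcd; split; first by case=> p; lia.
move=> h; exists (maxn a c); lia.
Qed.

Lemma claw_rat (lc rc la ra lb rb ld rd : rat) :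
  la <= ra -> lb <= rb -> ld <= rd ->
  (lc <= ra) -> (la <= rc) -> (lc <= rb) -> (lb <= rc) -> (lc <= rd) -> (ld <= rc) ->
  (ra < lb \/ rb < la) -> (ra < ld \/ rd < la) -> (rb < ld \/ rd < lb) ->
  (lc < la /\ ra < rc) \/ (lc < lb /\ rb < rc) \/ (lc < ld /\ rd < rc).
Proof. move=> *; lra. Qed.

Lemma claw_nat (lc rc la ra lb rb ld rd : nat) :
  (la <= ra)%N -> (lb <= rb)%N -> (ld <= rd)%N ->
  (lc <= ra)%N && (la <= rc)%N -> (lc <= rb)%N && (lb <= rc)%N -> (lc <= rd)%N && (ld <= rc)%N ->
  ~~ ((la <= rb)%N && (lb <= ra)%N) -> ~~ ((la <= rd)%N && (ld <= ra)%N) -> ~~ ((lb <= rd)%N && (ld <= rb)%N) ->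
  ((lc <= la) && (ra <= rc))%N || ((lc <= lb) && (rb <= rc))%N || ((lc <= ld) && (rd <= rc))%N.
Proof. move=> *; lia. Qed.
Lemma hit_exists (V : finType) (l r : V -> rat) :
  (forall v, l v <= r v) -> proper_family l r ->
  forall A : {set V}, exists Tq : seq rat,
  [/\ (forall t, t \in Tq -> exists2 y, y \in A & t = r y),
      (forall v, v \in A -> exists2 t, t \in Tq & in_interval (l v) (r v) t) &
      (forall v t t', v \in A -> t \in Tq -> t' \in Tq ->
          in_interval (l v) (r v) t -> in_interval (l v) (r v) t' -> t = t')].
Proof.
move=> hlr hp A; have [n] := ubnP #|A|; elim: n A => // n IH A hA.
case: (set_0Vmem A) => [-> | [w0 w0A]].
  by exists [::]; split=> // v; rewrite in_set0.
case: (@arg_minP _ _ V w0 (mem A) r w0A) => w wA wmin.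
set A' := [set x in A | r w < l x].
have hA' : (#|A'| < n)%N.
  suff : (#|A'| < #|A|)%N by move: hA; clear; lia.
  apply: proper_card; apply/properP; split.
    by apply/subsetP => x; rewrite inE => /andP[].
  by exists w => //; rewrite inE negb_and -leNgt hlr orbT.
case: (IH A' hA') => Tq' [h1 h2 h3].
exists (r w :: Tq'); split.
- move=> t; rewrite inE => /orP[/eqP -> | /h1 [y]]; first by exists w.
  by rewrite inE => /andP[yA _] ->; exists y.
- move=> v vA; case: (ltrP (r w) (l v)) => hv.
    by case: (h2 v); rewrite ?inE ?vA ?hv // => t tT tv; exists t; rewrite // inE tT orbT.
  exists (r w); first by rewrite inE eqxx.
  by rewrite /in_interval hv wmin.
- have key : forall v t, v \in A -> (l v <= r w) -> t \in Tq' ->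
      in_interval (l v) (r v) t -> False.
    move=> v t vA hv /h1 [y]; rewrite inE => /andP[yA hy] -> /andP[hvy1 hvy2].
    apply: (hp v y); split.
      by move=> p /andP[hp1 hp2]; rewrite /in_interval; apply/andP; split; lra.
    exists (l v); rewrite /in_interval lexx hlr /= negb_and -!ltNge; apply/orP; left; lra.
  move=> v t t' vA; rewrite !inE => /orP[/eqP -> | tT] /orP[/eqP -> | tT'] it it' //.
  + by case: (key v t' vA _ tT' it') => //; case/andP: it.
  + by case: (key v t vA _ tT it) => //; case/andP: it'.
  + case: (ltrP (r w) (l v)) => hv; last by case: (key v t vA hv tT it).
    by apply: (h3 v) => //; rewrite inE vA.
Qed.

Lemma proper_EH (V : finType) (e : rel V) :
  proper_interval_graph e -> exactly_hittable_interval_graph e.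
Proof.
case=> l [r [[hlr hedge] hp]].
case: (hit_exists hlr hp setT) => Tq [h1 h2 h3].
set U := undup ([seq l v | v <- enum V] ++ [seq r v | v <- enum V]).
pose rank q := count (fun s => s <= q) U.
have lU v : l v \in U by rewrite mem_undup mem_cat map_f ?mem_enum.
have rU v : r v \in U by rewrite mem_undup mem_cat orbC map_f ?mem_enum.
have rank_mono q1 q2 : q1 <= q2 -> (rank q1 <= rank q2)%N.
  move=> h; apply: sub_count => s /= hs; exact: le_trans hs h.
have rank_lt q1 q2 : q1 < q2 -> q2 \in U -> (rank q1 < rank q2)%N.
  move=> h q2U; rewrite /rank.
  have := count_predUI (fun s => s <= q1) (fun s => q1 < s <= q2) U.
  have -> : count (predI (fun s => s <= q1) (fun s => q1 < s <= q2)) U = 0%N.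
    apply/eqP; rewrite -leqn0 leqNgt -has_count; apply/hasP => -[s _] /=.
    by case/andP => a /andP[b _]; move: (lt_le_trans b a); rewrite ltxx.
  have -> : count (predU (fun s => s <= q1) (fun s => q1 < s <= q2)) U =
            count (fun s => s <= q2) U.
    apply: eq_count => s /=; case: (lerP s q1) => hs /=.
      by rewrite (le_trans hs (ltW h)).
    by [].
  have : (0 < count (fun s => (q1 < s <= q2)%R) U)%N.
    by rewrite -has_count; apply/hasP; exists q2 => //=; rewrite h lexx.
  lia.
have rank_le q1 q2 : q1 \in U -> (rank q1 <= rank q2)%N = (q1 <= q2).
  move=> q1U; case: (lerP q1 q2) => h; first by rewrite rank_mono.
  by apply/negbTE; rewrite -ltnNge; apply: rank_lt.
have rank_pos q : q \in U -> (0 < rank q)%N.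
  by move=> qU; rewrite -has_count; apply/hasP; exists q => //=.
have rank_size q : (rank q <= size U)%N by apply: count_size.
exists (size U), (fun v => rank (l v)), (fun v => rank (r v)),
  (fun p => has (fun t => rank t == p) Tq).
split; [|split].
- by move=> v; rewrite rank_pos ?rank_mono ?rank_size.
- move=> v; case: (h2 v (in_setT v)) => t0 t0T it0.
  have t0U : t0 \in U by case: (h1 t0 t0T) => y _ ->.
  rewrite (@eq_in_count _ _ (pred1 (rank t0))).
    by rewrite count_uniq_mem ?iota_uniq // mem_iota rank_pos // add1n ltnS rank_size.
  move=> p _ /=; apply/idP/eqP.
    case/andP=> /hasP [t tT /eqP <-] /andP[hl hr].
    have tU : t \in U by case: (h1 t tT) => y _ ->.
    rewrite rank_le // in hl; rewrite rank_le // in hr.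
    by rewrite (h3 v t t0) // ?in_setT /in_interval ?hl ?hr.
  move=> ->; apply/andP; split; first by apply/hasP; exists t0.
  by case/andP: it0 => a b; rewrite !rank_mono.
- move=> x y xy; rewrite (hedge x y xy) meet_rat ?hlr // meet_nat.
  + by rewrite !rank_le.
  + exact: rank_mono (hlr x).
  + exact: rank_mono (hlr y).
Qed.

Lemma nat_interval (V : finType) (e : rel V) (l r : V -> nat) :
  (forall v, l v <= r v)%N ->
  (forall x y, x != y ->
     (e x y <-> exists p : nat, [&& (l x <= p <= r x)%N & (l y <= p <= r y)%N])) ->
  interval_graph e.
Proof.
move=> hlr he; exists (fun v : V => ((l v)%:R : rat)).
exists (fun v : V => ((r v)%:R : rat)); split.
  by move=> v; rewrite ler_nat.
by move=> x y xy; rewrite he // meet_nat // meet_rat ?ler_nat // !ler_nat.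
Qed.

Lemma EH_interval (V : finType) (e : rel V) :
  exactly_hittable_interval_graph e -> interval_graph e.
Proof.
case=> n [l [r [T [hb [hc he]]]]]; apply: (nat_interval _ he) => v.
by case/andP: (hb v) => /andP[].
Qed.

Lemma contain_contra (V : finType) (l r : V -> rat) x y :
  proper_family l r -> l x <= r x -> l x < l y -> r y <= r x -> False.
Proof.
move=> hp hx h1 h2; apply: (hp x y); split.
  by move=> p /andP[a b]; rewrite /in_interval; apply/andP; split; lra.
exists (l x); rewrite /in_interval lexx hx /= negb_and -!ltNge; apply/orP; left; lra.
Qed.

Definition cL (k : 'I_4) : nat := nth 0%N [:: 2; 1; 3; 4]%N k.
Definition cR (k : 'I_4) : nat := nth 0%N [:: 4; 2; 3; 5]%N k.
Definition ce : rel 'I_4 :=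
  fun x y => (x != y) && ((cL x <= cR y) && (cL y <= cR x))%N.

Lemma ce_simple : simple_graph ce.
Proof.
split=> [x y | x]; rewrite /ce ?eqxx // eq_sym; congr (_ && _); apply: andbC.
Qed.

Lemma cLR v : (cL v <= cR v)%N.
Proof. by case: v => [[|[|[|[|k]]]] hk]. Qed.

Lemma ce_EH : exactly_hittable_interval_graph ce.
Proof.
exists 5%N, cL, cR, (fun p => p \in [:: 1; 3; 5]%N); split; [|split].
- by case=> [[|[|[|[|k]]]] hk].
- by case=> [[|[|[|[|k]]]] hk].
- by move=> x y xy; rewrite /ce xy meet_nat ?cLR.
Qed.

Lemma ce_notproper : ~ proper_interval_graph ce.
Proof.
case=> l [r [[hlr he] hp]].
have E x y : x != y -> ce x y = (l x <= r y) && (l y <= r x).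
  move=> xy; move: (he x y xy); rewrite meet_rat ?hlr // => -[h1 h2].
  by apply/idP/idP; [exact: h1 | exact: h2].
have disj x y : x != y -> ce x y = false -> r x < l y \/ r y < l x.
  move=> xy; rewrite E // => /negbT; rewrite negb_and -!ltNge => /orP[h|h].
    by right.
  by left.
have meet x y : x != y -> ce x y = true -> (l x <= r y) /\ (l y <= r x).
  by move=> xy; rewrite E // => /andP.
pose c : 'I_4 := @Ordinal 4 0 isT.
pose a : 'I_4 := @Ordinal 4 1 isT.
pose b : 'I_4 := @Ordinal 4 2 isT.
pose d : 'I_4 := @Ordinal 4 3 isT.
have [ca ac] := meet c a isT erefl.
have [cb bc] := meet c b isT erefl.
have [cd dc] := meet c d isT erefl.
case: (claw_rat (hlr a) (hlr b) (hlr d) ca ac cb bc cd dc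
   (disj a b isT erefl) (disj a d isT erefl) (disj b d isT erefl))
   => [[h1 h2]|[[h1 h2]|[h1 h2]]];
  exact: (contain_contra hp (hlr c) h1 (ltW h2)).
Qed.

Definition kL (k : 'I_5) : nat := nth 0%N [:: 0; 1; 3; 5; 7]%N k.
Definition kR (k : 'I_5) : nat := nth 0%N [:: 10; 1; 3; 5; 7]%N k.
Definition ke : rel 'I_5 :=
  fun x y => (x != y) && ((kL x <= kR y) && (kL y <= kR x))%N.

Lemma ke_simple : simple_graph ke.
Proof.
split=> [x y | x]; rewrite /ke ?eqxx // eq_sym; congr (_ && _); apply: andbC.
Qed.

Lemma kLR v : (kL v <= kR v)%N.
Proof. by case: v => [[|[|[|[|[|k]]]]] hk]. Qed.

Lemma ke_interval : interval_graph ke.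
Proof.
apply: (nat_interval kLR) => x y xy; by rewrite /ke xy meet_nat ?kLR.
Qed.

Lemma ke_notEH : ~ exactly_hittable_interval_graph ke.
Proof.
case=> n [l [r [T [hb [hc he]]]]].
have hlr v : (l v <= r v)%N by case/andP: (hb v) => /andP[].
have E x y : x != y -> ke x y = (l x <= r y)%N && (l y <= r x)%N.
  move=> xy; move: (he x y xy); rewrite meet_nat ?hlr // => -[h1 h2].
  by apply/idP/idP; [exact: h1 | exact: h2].
pose c : 'I_5 := @Ordinal 5 0 isT.
pose cont i := ((l c <= l i) && (r i <= r c))%N.
have pt i : exists2 t, t \in iota 1 n & T t && (l i <= t <= r i)%N.
  by apply/hasP; rewrite has_count hc.
have two i j : i != j -> ke i j = false -> cont i -> cont j -> False.
  move=> ij hij /andP[ci1 ci2] /andP[cj1 cj2].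
  move: hij; rewrite E // => /negbT dij.
  case: (pt i) => t1 t1I /andP[Tt1 ht1].
  case: (pt j) => t2 t2I /andP[Tt2 ht2].
  have t12 : t1 != t2 by apply/negP => /eqP e12; move: e12 ht1 ht2 dij; clear; lia.
  have := hc c.
  have : (count (predU (pred1 t1) (pred1 t2)) (iota 1 n) <=
          count (fun p => T p && (l c <= p <= r c)%N) (iota 1 n))%N.
    apply: sub_count => p /orP[/eqP->|/eqP->] /=.
      by rewrite Tt1 /=; move: ci1 ci2 ht1; clear; lia.
    by rewrite Tt2 /=; move: cj1 cj2 ht2; clear; lia.
  have := count_predUI (pred1 t1) (pred1 t2) (iota 1 n).
  have -> : count (predI (pred1 t1) (pred1 t2)) (iota 1 n) = 0%N.
    apply/eqP; rewrite -leqn0 leqNgt -has_count; apply/hasP => -[p _] /=.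
    by case/andP => /eqP -> /eqP e; rewrite e eqxx in t12.
  rewrite !count_uniq_mem ?iota_uniq // t1I t2I.
  lia.
pose a1 : 'I_5 := @Ordinal 5 1 isT.
pose a2 : 'I_5 := @Ordinal 5 2 isT.
pose a3 : 'I_5 := @Ordinal 5 3 isT.
pose a4 : 'I_5 := @Ordinal 5 4 isT.
have m1 : (l c <= r a1)%N && (l a1 <= r c)%N by rewrite -(E c a1).
have m2 : (l c <= r a2)%N && (l a2 <= r c)%N by rewrite -(E c a2).
have m3 : (l c <= r a3)%N && (l a3 <= r c)%N by rewrite -(E c a3).
have m4 : (l c <= r a4)%N && (l a4 <= r c)%N by rewrite -(E c a4).
have d12 : ~~ ((l a1 <= r a2)%N && (l a2 <= r a1)%N) by rewrite -(E a1 a2).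
have d13 : ~~ ((l a1 <= r a3)%N && (l a3 <= r a1)%N) by rewrite -(E a1 a3).
have d14 : ~~ ((l a1 <= r a4)%N && (l a4 <= r a1)%N) by rewrite -(E a1 a4).
have d23 : ~~ ((l a2 <= r a3)%N && (l a3 <= r a2)%N) by rewrite -(E a2 a3).
have d24 : ~~ ((l a2 <= r a4)%N && (l a4 <= r a2)%N) by rewrite -(E a2 a4).
have d34 : ~~ ((l a3 <= r a4)%N && (l a4 <= r a3)%N) by rewrite -(E a3 a4).
have T123 : cont a1 || cont a2 || cont a3 :=
  claw_nat (hlr a1) (hlr a2) (hlr a3) m1 m2 m3 d12 d13 d23.
have T124 : cont a1 || cont a2 || cont a4 :=
  claw_nat (hlr a1) (hlr a2) (hlr a4) m1 m2 m4 d12 d14 d24.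
have T134 : cont a1 || cont a3 || cont a4 :=
  claw_nat (hlr a1) (hlr a3) (hlr a4) m1 m3 m4 d13 d14 d34.
have T234 : cont a2 || cont a3 || cont a4 :=
  claw_nat (hlr a2) (hlr a3) (hlr a4) m2 m3 m4 d23 d24 d34.
move: T123 T124 T134 T234.
case k1: (cont a1); case k2: (cont a2); case k3: (cont a3); case k4: (cont a4);
  try done;
  first [ by case: (two a1 a2 isT erefl k1 k2)
        | by case: (two a1 a3 isT erefl k1 k3)
        | by case: (two a1 a4 isT erefl k1 k4)
        | by case: (two a2 a3 isT erefl k2 k3)
        | by case: (two a2 a4 isT erefl k2 k4)
        | by case: (two a3 a4 isT erefl k3 k4) ].
Qed.

Theorem theorem6 :
  (forall (V : finType) (e : rel V), simple_graph e ->
     proper_interval_graph e -> exactly_hittable_interval_graph e) /\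
  (exists (V : finType) (e : rel V), simple_graph e /\
     exactly_hittable_interval_graph e /\ ~ proper_interval_graph e) /\
  (forall (V : finType) (e : rel V), simple_graph e ->
     exactly_hittable_interval_graph e -> interval_graph e) /\
  (exists (V : finType) (e : rel V), simple_graph e /\
     interval_graph e /\ ~ exactly_hittable_interval_graph e).
Proof.
split; first by move=> V e _; apply: proper_EH.
split; first by exists 'I_4, ce; split; [exact: ce_simple | split; [exact: ce_EH | exact: ce_notproper]].
split; first by move=> V e _; apply: EH_interval.
by exists 'I_5, ke; split; [exact: ke_simple | split; [exact: ke_interval | exact: ke_notEH]].
Qed.
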